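(* Let $\mathfrak D$ be an admissible domain with cover $\tilde{\mathfrak D}$, $T>0$, and let $\bm\varphi\in C^1([0,T];C^1(\mathbf{Cl}\tilde{\mathfrak D};\mathbb R^3))\cap C([0,T];C^2(\mathbf{Cl}\tilde{\mathfrak D};\mathbb R^3))$ satisfy $\bm\varphi(0,\bar{\bm x})=\bar{\bm x}$ for all $\bar{\bm x}\in\tilde{\mathfrak D}$. Let $\mathfrak O,\mathfrak O_0,\mathfrak O_1$ be connected open subsets of $\mathbb R^3$ with $\mathfrak B_0\subset\mathfrak O_0\Subset\mathfrak O\Subset\mathfrak O_1\Subset\tilde{\mathfrak D}$ and $\mathfrak O_1$ convex. Then for a sufficiently small $T_1\in\,]0,T[$ there is a mapping $\bm\psi(t,\cdot):\mathfrak O\to\mathfrak O_1$, $t\in[0,T_1]$, such that $\bm x=\bm\varphi(t,\bm\psi(t,\bm x))$ for all $(t,\bm x)\in[0,T_1]\times\mathfrak O$, and moreover $\mathfrak O_0\subset\bm\psi(t,\mathfrak O)$ for all $t\in[0,T_1]$.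
   Context: $\mathfrak B_0=\{\bm x\in\mathbb R^3:\|\bm x\|\le R_0\}$ with $R_0>0$. An admissible domain is an open connected $\mathfrak D\subset\mathbb R^3$ such that $\tilde{\mathfrak D}=\mathfrak D\cup\mathfrak B_0$ (its cover) is open and connected, $\mathfrak D=\tilde{\mathfrak D}\setminus\mathfrak B_0$, and $\partial\mathfrak D$ is smooth. $A\Subset B$ means $\mathbf{Cl}A$ is a compact subset of $B$. *)

(* Defs.v *)
From HB Require Import structures.
From mathcomp Require Import all_boot all_order all_algebra.
From mathcomp Require Import all_classical all_reals all_analysis.
Set Implicit Arguments. Unset Strict Implicit. Unset Printing Implicit Defensive.
Import Order.TTheory GRing.Theory Num.Theory.
Import numFieldNormedType.Exports.
Local Open Scope classical_set_scope.
Local Open Scope ring_scope.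

Section Defs.
Variable R : realType.
Local Notation V := 'rV[R]_3.

(* Euclidean norm on R^3 (the library norm on 'rV is the max norm). *)
Definition enorm (x : V) : R := Num.sqrt (\sum_(i < 3) x 0 i ^+ 2).

Definition Bzero (R0 : R) : set V := [set x | enorm x <= R0].

Definition evec (i : 'I_3) : V := delta_mx 0 i.

Fixpoint dit {W : normedModType R} (s : seq 'I_3) (f : V -> W) : V -> W :=
  match s with
  | [::] => f
  | i :: s' => fun x => derive (dit s' f) x (evec i)
  end.

Definition smooth_on (U : set V) (g : V -> R) : Prop :=
  forall s : seq 'I_3,
    (forall i x, U x -> derivable (dit s g) x (evec i)) /\
    {in U, continuous (dit s g)}.

Definition bdry (A : set V) : set V := closure A `\` interior A.

Definition smooth_boundary (A : set V) : Prop :=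
  forall p, bdry A p ->
    exists U : set V, exists g : V -> R,
      [/\ open U, U p, smooth_on U g,
          (forall x, U x -> exists i, dit [:: i] g x != 0) &
          (A `&` U = [set x | U x /\ g x < 0])].

Definition admissible (R0 : R) (D : set V) : Prop :=
  [/\ open D /\ connected D,
      open (D `|` Bzero R0), connected (D `|` Bzero R0),
      D = (D `|` Bzero R0) `\` Bzero R0 & smooth_boundary D].

Definition dcover (R0 : R) (D : set V) : set V := D `|` Bzero R0.

Definition compact_in (A B : set V) : Prop :=
  compact (closure A) /\ closure A `<=` B.

(* g (defined on the open set O) belongs to the closure space:
   it extends to a bounded continuous function on closure O. *)
Definition ext_bcont {W : normedModType R} (O : set V) (g : V -> W) : Prop :=
  exists G : V -> W,
    [/\ {within closure O, continuous G},
        (forall x, O x -> G x = g x) &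
        exists M : R, forall x, closure O x -> `|G x| <= M].

(* f in C^k(Cl O): all partial derivatives of order <= k exist in O and
   extend to bounded continuous functions on Cl O. *)
Definition Ck_cl (k : nat) (O : set V) (f : V -> V) : Prop :=
  forall s : seq 'I_3, (size s <= k)%N ->
    ext_bcont O (dit s f) /\
    ((size s < k)%N -> forall i x, O x -> derivable (dit s f) x (evec i)).

(* t |-> f t is continuous [0,T] -> C^k(Cl O) (C^k norm = sup-norms of
   derivatives of order <= k). *)
Definition cont_Ck (k : nat) (T : R) (O : set V) (f : R -> V -> V) : Prop :=
  (forall t, 0 <= t <= T -> Ck_cl k O (f t)) /\
  forall t0, 0 <= t0 <= T -> forall eps : R, 0 < eps ->
    exists2 delta : R, 0 < delta &
      forall t, 0 <= t <= T -> `|t - t0| < delta ->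
        forall s : seq 'I_3, (size s <= k)%N ->
          forall x, O x -> `|dit s (f t) x - dit s (f t0) x| <= eps.

(* t |-> f t is in C^1([0,T]; C^k(Cl O)): differentiable (one-sided at the
   endpoints) in the C^k norm with a derivative in C([0,T]; C^k(Cl O)). *)
Definition C1_Ck (k : nat) (T : R) (O : set V) (f : R -> V -> V) : Prop :=
  cont_Ck k T O f /\
  exists df : R -> V -> V,
    cont_Ck k T O df /\
    forall t0, 0 <= t0 <= T -> forall eps : R, 0 < eps ->
      exists2 delta : R, 0 < delta &
        forall t, 0 <= t <= T -> 0 < `|t - t0| < delta ->
          forall s : seq 'I_3, (size s <= k)%N ->
            forall x, O x ->
              `|(t - t0)^-1 *: (dit s (f t) x - dit s (f t0) x)
                 - dit s (df t0) x| <= eps.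

End Defs.

(* Main.v *)
Require Import Defs.
From HB Require Import structures.
From mathcomp Require Import all_boot all_order all_algebra.
From mathcomp Require Import all_classical all_reals all_analysis.
From mathcomp.algebra_tactics Require Import lra.
Import Order.TTheory GRing.Theory Num.Theory.
Import numFieldNormedType.Exports.
Local Open Scope classical_set_scope.
Local Open Scope ring_scope.

Section Fix.
Variable R : realType.
#[local] HB.instance Definition _ := NormedModule.on 'M[R]_(1,3).

Lemma fixpt (F : 'rV[R]_3 -> 'rV[R]_3) (c : 'rV[R]_3) (r : R) : 0 < r ->
  (forall y, `|c - y| <= r -> `|c - F y| <= r) ->
  (forall y y', `|c - y| <= r -> `|c - y'| <= r -> `|F y - F y'| <= 2^-1 * `|y - y'|) ->
  exists2 p, `|c - p| <= r & p = F p.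
Proof.
move=> r0 FS Fl.
pose B := [set y : 'rV[R]_3 | `|c - y| <= r].
have hB : {homo F : x / B x >-> B x} by move=> y; apply: FS.
pose G := mkfun_fun hB.
have q0 : (0 : R) <= 2^-1 by [].
have ctr : is_contraction G.
  exists (NngNum q0); split; first by rewrite /= invf_lt1 // ltr1n.
  by move=> [y y'] [/= By By']; apply: Fl.
have := @banach_fixed_point R 'M[R]_(1,3) B G ctr.
case.
- have -> : B = closed_ball c r by rewrite closed_ballE.
  exact: closed_ball_closed.
- by exists c; rewrite /B /= subrr normr0 ltW.
by move=> p Bp Hp; exists p.
Qed.
End Fix.
Lemma compact_unif (R : realType) (W : normedModType R) (K U : set W) :
  compact K -> open U -> K `<=` U ->
  exists2 r : R, 0 < r & forall x y, K x -> `|x - y| < r -> U y.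
Proof.
move=> cK oU KU.
have /compact_near_coveringP cv := cK.
have := cv R ((0:R)^'+) (fun r x => forall y, `|x - y| < r -> U y) _.
move=> H.
have {H} H : (0:R)^'+ (fun r => K `<=` (fun x => forall y, `|x - y| < r -> U y)).
  apply: H => x Kx.
  have : nbhs x U by apply: open_nbhs_nbhs; split => //; exact: KU.
  move=> /nbhs_ballP [e e0 eU].
  have e2 : 0 < e / 2 by rewrite divr_gt0.
  near=> x' r.
  have hr : r < e / 2 by near: r; apply: nbhs_right_lt.
  have hx : `|x - x'| < e / 2.
    near: x'; apply/nbhs_ballP; exists (e/2) => // z.
    by rewrite -ball_normE.
  move=> y xy.
  apply: eU; rewrite -ball_normE /ball_ /=.
  have -> : x - y = (x - x') + (x' - y) by rewrite addrA subrK.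
  rewrite (splitr e); apply: (le_lt_trans (ler_normD _ _)).
  by apply: ltrD => //; apply: lt_trans hr.
have [r [Hr rpos]] := filter_ex (filterI H (nbhs_right_gt 0)).
by exists r => // x y Kx; apply: Hr.
Unshelve. all: by end_near.
Qed.
Section Aux.
Variable R : realType.
Local Notation V := 'rV[R]_3.

Lemma entry_le (x : V) j : `|x 0 j| <= `|x|.
Proof.
rewrite [leRHS]/Num.norm /= mx_normrE; apply/bigmax_geP; right => /=.
by exists (0, j).
Qed.

Lemma norm_le_entries (x : V) c : (forall j, `|x 0 j| <= c) -> `|x| <= c.
Proof.
move=> H; rewrite [leLHS]/Num.norm /= mx_normrE; apply/bigmax_leP; split.
  exact: le_trans (normr_ge0 _) (H 0).
by move=> [i j] _ /=; rewrite (ord1 i); apply: H.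
Qed.

Lemma L1 (f : V -> V) (p e : V) (s : R) k :
  derivable f (s *: e + p) e ->
  is_derive s 1 (fun s => f (s *: e + p) 0 k) (('D_e f (s *: e + p)) 0 k).
Proof.
move=> df.
have E : (fun h : R => h^-1 *: (((fun s => f (s *: e + p) 0 k) \o shift s) (h *: 1)
             - f (s *: e + p) 0 k)) =
         (fun M : V => M 0 k) \o (fun h : R => h^-1 *: ((f \o shift (s *: e + p)) (h *: e) - f (s *: e + p))).
  apply/funext => h /=; rewrite !mxE [h *: 1]mulr1 scalerDl addrA.
  by [].
have C : (fun h : R => h^-1 *: (((fun s => f (s *: e + p) 0 k) \o shift s) (h *: 1)
             - f (s *: e + p) 0 k)) @ 0^' --> ('D_e f (s *: e + p)) 0 k.
  rewrite E; apply: cvg_comp; first exact: df.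
  exact: coord_continuous.
apply: DeriveDef; first exact: (cvgP _ C).
exact: cvg_lim C.
Qed.

Lemma step (f : V -> V) (p : V) (i : 'I_3) (a b eps : R) : a <= b ->
  (forall s, a <= s <= b -> derivable f (s *: evec R i + p) (evec R i) /\
     `|'D_(evec R i) f (s *: evec R i + p) - evec R i| <= eps) ->
  `|(f (b *: evec R i + p) - (b *: evec R i + p)) - (f (a *: evec R i + p) - (a *: evec R i + p))|
    <= eps * (b - a).
Proof.
move=> ab H; apply: norm_le_entries => k.
set e := evec R i.
pose u s := f (s *: e + p) 0 k - (s *: e + p) 0 k.
have du : forall s, a <= s <= b ->
    is_derive s 1 u ((('D_e f (s *: e + p)) 0 k) - e 0 k).
  move=> s /H [df _]; rewrite /u.
  have h1 := @L1 f p e s k df.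
  have h2 := @L1 id p e s k ltac:(apply: derivable_id).
  rewrite derive_id in h2.
  exact: is_deriveB.
have cu : {within `[a, b], continuous u}.
  apply: derivable_within_continuous => x; rewrite in_itv /= => xab.
  by have [] := du x xab.
have du' : forall x, x \in `]a, b[ ->
    is_derive x 1 u ((('D_e f (x *: e + p)) 0 k) - e 0 k).
  move=> x xin; apply: du.
  by move: xin; rewrite in_itv /= => /andP[/ltW -> /ltW ->].
have [c cab Hc] := MVT_segment ab du' cu.
have -> : ((f (b *: e + p) - (b *: e + p)) - (f (a *: e + p) - (a *: e + p))) 0 k
    = u b - u a by rewrite /u !mxE.
rewrite Hc normrM (ger0_norm (_ : 0 <= b - a)) ?subr_ge0 //.
apply: ler_wpM2r; first by rewrite subr_ge0.
have [_ He] : derivable f (c *: e + p) e /\ `|'D_e f (c *: e + p) - e| <= eps.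
  by apply: H; move: cab; rewrite in_itv /=.
apply: le_trans He.
have -> : ('D_e f (c *: e + p)) 0 k - e 0 k = ('D_e f (c *: e + p) - e) 0 k
  by rewrite !mxE.
exact: entry_le.
Qed.

Lemma step2 (f : V -> V) (p : V) (i : 'I_3) (h eps : R) :
  (forall s, (0 <= s <= h) || (h <= s <= 0) -> derivable f (s *: evec R i + p) (evec R i) /\
     `|'D_(evec R i) f (s *: evec R i + p) - evec R i| <= eps) ->
  `|(f (h *: evec R i + p) - (h *: evec R i + p)) - (f p - p)| <= eps * `|h|.
Proof.
move=> H; have [h0|h0] := leP 0 h.
  have := @step f p i 0 h eps h0.
  rewrite scale0r add0r subr0 (ger0_norm h0); apply => s sh.
  by apply: H; rewrite sh.
have := @step f p i h 0 eps (ltW h0).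
rewrite scale0r add0r sub0r (ltr0_norm h0) -normrN opprB; apply => s sh.
by apply: H; rewrite sh orbT.
Qed.

Definition Pm (y y' : V) (m : nat) : V := \row_j (if (j < m)%N then y' 0 j else y 0 j).

Lemma Pm0 y y' : Pm y y' 0 = y.
Proof. by apply/rowP => j; rewrite !mxE. Qed.

Lemma Pm3 y y' : Pm y y' 3 = y'.
Proof. by apply/rowP => j; rewrite !mxE ltn_ord. Qed.

Lemma evecE (i j : 'I_3) : evec R i 0 j = (i == j)%:R.
Proof. by rewrite /evec mxE eqxx /= eq_sym. Qed.

Lemma PmS y y' (m : 'I_3) (s : R) :
  s *: evec R m + Pm y y' m =
  \row_j (if (j < m)%N then y' 0 j else if j == m then y 0 j + s else y 0 j).
Proof.
apply/rowP => j; rewrite mxE [in X in _ + X]mxE mxE evecE mxE eq_sym.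
case: (eqVneq j m) => [->|jm]; first by rewrite ltnn mulr1 addrC.
by rewrite mulr0 add0r.
Qed.

Lemma PmSS (y y' : V) (m : 'I_3) :
  (y' 0 m - y 0 m) *: evec R m + Pm y y' m = Pm y y' m.+1.
Proof.
rewrite PmS; apply/rowP => j; rewrite !mxE.
case: (eqVneq j m) => [->|jm] /=; first by rewrite ltnn ltnSn addrC subrK.
rewrite [in RHS]ltnS [in RHS]leq_eqVlt.
by move: jm; rewrite -val_eqE /= => /negbTE ->.
Qed.

Lemma box_seg (c y y' : V) (r : R) (m : 'I_3) (s : R) :
  `|c - y| <= r -> `|c - y'| <= r ->
  (0 <= s <= y' 0 m - y 0 m) || (y' 0 m - y 0 m <= s <= 0) ->
  `|c - (s *: evec R m + Pm y y' m)| <= r.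
Proof.
move=> Hy Hy' Hs; rewrite PmS; apply: norm_le_entries => j; rewrite !mxE.
have Ey : `|c 0 j - y 0 j| <= r.
  by apply: le_trans Hy; have := entry_le (c - y) j; rewrite !mxE.
have Ey' : `|c 0 j - y' 0 j| <= r.
  by apply: le_trans Hy'; have := entry_le (c - y') j; rewrite !mxE.
case: ifP => // _; case: (eqVneq j m) => [ejm|] //.
rewrite ejm in Ey Ey' *.
move: Ey Ey'; rewrite !ler_norml.
by case/orP: Hs => /andP[s1 s2] /andP[a1 a2] /andP[b1 b2]; apply/andP; split; lra.
Qed.

Lemma lipbox (f : V -> V) (c : V) (r eps : R) :
  (forall z, `|c - z| <= r -> forall i, derivable f z (evec R i) /\
       `|'D_(evec R i) f z - evec R i| <= eps) ->
  forall y y', `|c - y| <= r -> `|c - y'| <= r ->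
  `|(f y' - y') - (f y - y)| <= (eps + eps + eps) * `|y' - y|.
Proof.
move=> H y y' Hy Hy'.
have eps0 : 0 <= eps by have [_ +] := H y Hy 0; apply: le_trans.
pose G := fun z => f z - z.
have key : forall m : 'I_3, `|G (Pm y y' m.+1) - G (Pm y y' m)| <= eps * `|y' - y|.
  move=> m; rewrite /G -PmSS.
  apply: (le_trans (@step2 f (Pm y y' m) m (y' 0 m - y 0 m) eps _)).
    by move=> s Hs; apply: H; apply: box_seg.
  apply: ler_wpM2l => //.
  by have := entry_le (y' - y) m; rewrite !mxE.
have -> : f y' - y' - (f y - y) =
   (G (Pm y y' (@Ordinal 3 2 isT).+1) - G (Pm y y' (@Ordinal 3 2 isT)))
 + (G (Pm y y' (@Ordinal 3 1 isT).+1) - G (Pm y y' (@Ordinal 3 1 isT)))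
 + (G (Pm y y' (@Ordinal 3 0 isT).+1) - G (Pm y y' (@Ordinal 3 0 isT))).
  rewrite /= Pm0 Pm3 /G.
  have tele (a b c1 d : V) : a - d = (a - b) + (b - c1) + (c1 - d).
    by rewrite -!addrA !addKr.
  exact: tele.
rewrite !mulrDl; apply: le_trans (ler_normD _ _) _; apply: lerD => //.
by apply: le_trans (ler_normD _ _) _; apply: lerD.
Qed.
End Aux.

Theorem proposition2 (R : realType) (R0 : R) (D : set 'rV[R]_3) (T : R)
  (phi : R -> 'rV[R]_3 -> 'rV[R]_3) (O O0 O1 : set 'rV[R]_3) :
  0 < R0 -> admissible R0 D -> 0 < T ->
  C1_Ck 1 T (dcover R0 D) phi -> cont_Ck 2 T (dcover R0 D) phi ->
  (forall x, dcover R0 D x -> phi 0 x = x) ->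
  open O -> connected O -> open O0 -> connected O0 ->
  open O1 -> connected O1 -> convex_set O1 ->
  Bzero R0 `<=` O0 -> compact_in O0 O -> compact_in O O1 ->
  compact_in O1 (dcover R0 D) ->
  exists T1 : R, 0 < T1 < T /\
    exists psi : R -> 'rV[R]_3 -> 'rV[R]_3,
      forall t, 0 <= t <= T1 ->
        (forall x, O x -> O1 (psi t x) /\ x = phi t (psi t x)) /\
        O0 `<=` psi t @` O.
Proof.
move=> R0pos adm Tpos [[Ck tc] _] _ phi0 oO _ oO0 _ oO1 _ _ _ [cK0 K0O] [cK KO1] [cK1 K1D].
set D' := dcover R0 D in Ck tc phi0 K1D.
have oD' : open D' by case: adm => _ + _ _ _.
have O1D : O1 `<=` D' by move=> y /subset_closure /K1D.
have OO1 : O `<=` O1 by move=> y /subset_closure /KO1.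
have O0O : O0 `<=` O by move=> y /subset_closure /K0O.
have [r1 r1pos Hr1] := @compact_unif _ _ _ _ cK oO1 KO1.
have [r0 r0pos Hr0] := @compact_unif _ _ _ _ cK0 oO K0O.
have m1 : Num.min r0 r1 <= r0 by rewrite ge_min lexx.
have m2 : Num.min r0 r1 <= r1 by rewrite ge_min lexx orbT.
have m0 : 0 < Num.min r0 r1 by rewrite lt_min r0pos r1pos.
pose r := Num.min r0 r1 / 2.
have rpos : 0 < r by rewrite /r; lra.
have rr0 : r < r0 by rewrite /r; lra.
have rr1 : r < r1 by rewrite /r; lra.
pose eps := Num.min (r / 2) (6^-1).
have epspos : 0 < eps by rewrite lt_min divr_gt0 //= invr_gt0 ltr0n.
have epsr : eps <= r / 2 by rewrite ge_min lexx.
have eps6 : eps <= 6^-1 by rewrite ge_min lexx orbT.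
have [delta dpos Hd] := tc 0 (ltac:(by rewrite lexx ltW)) eps epspos.
have n1 : Num.min delta T <= delta by rewrite ge_min lexx.
have n2 : Num.min delta T <= T by rewrite ge_min lexx orbT.
have n0 : 0 < Num.min delta T by rewrite lt_min dpos Tpos.
pose T1 := Num.min delta T / 2.
have T1pos : 0 < T1 by rewrite /T1; lra.
have T1T : T1 < T by rewrite /T1; lra.
have T1d : T1 < delta by rewrite /T1; lra.
exists T1; split; first by rewrite T1pos T1T.
pose psi t x := xget 0 [set y | `|x - y| <= r /\ phi t y = x].
exists psi => t /andP[t0 tT1].
have tT : 0 <= t <= T by rewrite t0 ltW // (le_lt_trans tT1 T1T).
have td : `|t - 0| < delta by rewrite subr0 ger0_norm // (le_lt_trans tT1 T1d).
have B0 : forall y, D' y -> `|phi t y - y| <= eps.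
  by move=> y Dy; have := Hd t tT td [::] isT y Dy; rewrite /= phi0.
have B1 : forall y, D' y -> forall i, derivable (phi t) y (evec R i) /\
    `|'D_(evec R i) (phi t) y - evec R i| <= eps.
  move=> y Dy i; split; first by have [_ +] := Ck t tT [::] isT; apply.
  have := Hd t tT td [:: i] isT y Dy; rewrite /=.
  suff -> : 'D_(evec R i) (phi 0) y = evec R i by [].
  rewrite -[RHS](derive_id y (evec R i)); apply: near_eq_derive.
  by near=> z; apply: phi0; near: z; apply: open_nbhs_nbhs.
have ballD : forall x, O x -> forall z, `|x - z| <= r -> O1 z.
  move=> x Ox z Hz; apply: (Hr1 x z); first exact: subset_closure.
  exact: le_lt_trans Hz rr1.
have Lip : forall x, O x -> forall y y', `|x - y| <= r -> `|x - y'| <= r ->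
    `|(phi t y' - y') - (phi t y - y)| <= 2^-1 * `|y' - y|.
  move=> x Ox y y' Hy Hy'.
  apply: le_trans (@lipbox R (phi t) x r eps _ y y' Hy Hy') _.
    by move=> z Hz i; apply: B1; apply/O1D/(ballD x Ox).
  apply: ler_wpM2r => //; lra.
have Ex : forall x, O x -> `|x - psi t x| <= r /\ phi t (psi t x) = x.
  move=> x Ox; rewrite /psi; apply: (@xgetPex _ 0 [set y | `|x - y| <= r /\ phi t y = x]).
  have [p Hp Fp] : exists2 p, `|x - p| <= r & p = x + (p - phi t p).
    apply: (@fixpt R (fun y => x + (y - phi t y)) x r rpos).
  - move=> y Hy; rewrite opprD addrA subrr sub0r normrN.
    rewrite distrC; apply: le_trans (B0 y (O1D _ (ballD x Ox y Hy))) _.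
    by apply: le_trans epsr _; lra.
  - move=> y y' Hy Hy'.
    have -> : x + (y - phi t y) - (x + (y' - phi t y')) =
              (phi t y' - y') - (phi t y - y).
      by rewrite opprD addrACA subrr add0r addrC !opprB.
    by rewrite (distrC y); exact: (Lip x Ox y y' Hy Hy').
  exists p; split => //.
  apply/eqP; rewrite -subr_eq0 -oppr_eq0 opprB; apply/eqP.
  by move/(congr1 (fun z => z - p)): Fp; rewrite subrr addrCA [p + _]addrC addrK => <-.
split.
  move=> x Ox; have [H1 H2] := Ex x Ox; split; first exact: (ballD x).
  by rewrite H2.
move=> z O0z.
have Dz : D' z by apply/O1D/OO1/O0O.
have Hxz : `|z - phi t z| <= eps by rewrite distrC; apply: B0.
have Ox : O (phi t z).
  apply: (Hr0 z); first exact: subset_closure.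
  by apply: le_lt_trans Hxz _; lra.
exists (phi t z) => //.
have [Hp Pp] := Ex _ Ox.
have Hz : `|phi t z - z| <= r by rewrite distrC; apply: le_trans Hxz _; lra.
have := Lip _ Ox _ _ Hp Hz; rewrite Pp.
have -> : phi t z - z - (phi t z - psi t (phi t z)) = psi t (phi t z) - z.
  by rewrite opprB addrC addrA subrK.
rewrite distrC => H.
have : `|z - psi t (phi t z)| = 0 by have := normr_ge0 (z - psi t (phi t z)); lra.
by move/normr0_eq0/subr0_eq.
Unshelve. all: by end_near.
Qed.
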